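(* Let $N\ge 1$ be an integer, let $\eta_1,\eta_2$ be real with $0<\eta_1,\eta_2<1$, $\eta_1+\eta_2<1$, and let $u_1,v_1,u_2,v_2$ be complex numbers. Then the polynomials $P_{m_1,m_2}$ ($m_1,m_2\ge0$ integers, $m_1+m_2\le N$) are mutually orthogonal with respect to the trinomial weight, i.e. \[ \sum_{\substack{x_1,x_2\ge 0\\ x_1+x_2\le N}} b_2(x_1,x_2;N;\eta_1,\eta_2)\,P_{m_1,m_2}(x_1,x_2)P_{n_1,n_2}(x_1,x_2)=0\quad\text{whenever }(m_1,m_2)\neq(n_1,n_2), \] if and only if \[ \text{(a) } \eta_1u_1+\eta_2v_1=1,\qquad \text{(b) } \eta_1u_2+\eta_2v_2=1,\qquad \text{(c) } \eta_1u_1u_2+\eta_2v_1v_2=1 . \] (For the sufficiency direction one may additionally assume $u_1,u_2,v_1,v_2\notin\{0,1\}$ and $u_1v_2-u_2v_1\neq 0$.)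
   Context: Notation: $(a)_k=a(a+1)\cdots(a+k-1)$, $(a)_0=1$, is the Pochhammer symbol. For a nonnegative integer $N$ and nonnegative integers $m_1,m_2,x_1,x_2$ with $m_1+m_2\le N$, $x_1+x_2\le N$, and parameters $u_1,v_1,u_2,v_2$, define the 2-variable Krawtchouk polynomial \[ P_{m_1,m_2}(x_1,x_2)=\sum_{\substack{i,j,k,l\ge 0\\ i+j+k+l\le N}}\frac{(-m_1)_{i+j}(-m_2)_{k+l}(-x_1)_{i+k}(-x_2)_{j+l}}{i!\,j!\,k!\,l!\,(-N)_{i+j+k+l}}\,u_1^i v_1^j u_2^k v_2^l . \] The trinomial distribution is $b_2(x_1,x_2;N;\eta_1,\eta_2)=\frac{N!}{x_1!\,x_2!\,(N-x_1-x_2)!}\eta_1^{x_1}\eta_2^{x_2}(1-\eta_1-\eta_2)^{N-x_1-x_2}$. *)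

(* Defs.v *)
(* complex numbers are modelled by an arbitrary
   numClosedFieldType C (e.g. algC); "real" eta's are elements of C with
   0 < eta < 1 (which forces them to be real). *)
From HB Require Import structures.
From mathcomp Require Import all_boot all_order all_algebra.
Set Implicit Arguments. Unset Strict Implicit. Unset Printing Implicit Defensive.
Import Order.TTheory GRing.Theory Num.Theory.
Local Open Scope ring_scope.

Definition poch (C : numClosedFieldType) (a : C) (k : nat) : C :=
  \prod_(i < k) (a + i%:R).

Definition Kraw2 (C : numClosedFieldType) (N : nat) (u1 v1 u2 v2 : C)
    (m1 m2 x1 x2 : nat) : C :=
  \sum_(i < N.+1) \sum_(j < N.+1) \sum_(k < N.+1) \sum_(l < N.+1)
    if (i + j + k + l <= N)%N then
      poch (- m1%:R) (i + j) * poch (- m2%:R) (k + l)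
      * poch (- x1%:R) (i + k) * poch (- x2%:R) (j + l)
      / ((i`! * j`! * k`! * l`!)%:R * poch (- N%:R) (i + j + k + l))
      * u1 ^+ i * v1 ^+ j * u2 ^+ k * v2 ^+ l
    else 0.

Definition trinom (C : numClosedFieldType) (N x1 x2 : nat) (eta1 eta2 : C) : C :=
  N`!%:R / (x1`! * x2`! * (N - x1 - x2)`!)%:R
  * eta1 ^+ x1 * eta2 ^+ x2 * (1 - eta1 - eta2) ^+ (N - x1 - x2).

Definition Kraw2_orthogonal (C : numClosedFieldType) (N : nat)
    (eta1 eta2 u1 v1 u2 v2 : C) : Prop :=
  forall m1 m2 n1 n2 : nat,
    (m1 + m2 <= N)%N -> (n1 + n2 <= N)%N -> (m1, m2) <> (n1, n2) ->
    \sum_(x1 < N.+1) \sum_(x2 < N.+1)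
      (if (x1 + x2 <= N)%N then
         trinom N x1 x2 eta1 eta2 * Kraw2 N u1 v1 u2 v2 m1 m2 x1 x2
         * Kraw2 N u1 v1 u2 v2 n1 n2 x1 x2
       else 0) = 0.

(* Main.v *)
Require Import Defs.
From HB Require Import structures.
From mathcomp Require Import all_boot all_order all_algebra.
From Stdlib Require Import Ring Field Lia.
Set Implicit Arguments. Unset Strict Implicit. Unset Printing Implicit Defensive.
Import Order.TTheory GRing.Theory Num.Theory.
Local Open Scope ring_scope.



Definition tri (n a b : nat) : nat := ('C(n, a) * 'C(n - a, b))%N.

Ltac nlia := try apply/ssrnat.leP; repeat match goal with
  | H : is_true (_ && _) |- _ => case/andP: H => ? ?
  | H : (_ && _) = true |- _ => case/andP: H => ? ?
  | H : is_true (_ <= _)%N |- _ => move/ssrnat.leP: H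
  | H : (_ <= _)%N = true |- _ => move/ssrnat.leP: H end;
  rewrite -?plusE -?minusE; intros; lia.

Section RingTac.
Variable R : comPzRingType.
Definition Radd (x y : R) : R := x + y.
Definition Rmul (x y : R) : R := x * y.
Definition Ropp (x : R) : R := - x.
Definition Rsub (x y : R) : R := Radd x (Ropp y).
Definition Rnat (x : R) n : R := x *+ n.
Definition Rexp (x : R) n : R := x ^+ n.
Lemma RT : @ring_theory R 0 1 Radd Rmul Rsub Ropp eq.
Proof. split=> //=; rewrite /Radd /Rmul /Rsub /Ropp; [exact: add0r|exact: addrC|exact: addrA|exact: mul1r|exact: mulrC|exact: mulrA|exact: mulrDl|exact: subrr]. Qed.
Add Ring Rr : RT.
Ltac canon := (match goal with |- @eq _ ?x ?y => change (@eq R x y) end); repeat match goal with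
 | |- context [@Algebra.zero ?s] => progress change (@Algebra.zero s) with (0 : R)
 | |- context [@GRing.one ?s] => progress change (@GRing.one s) with (1 : R)
 | |- context [@Algebra.add ?s ?x ?y] => change (@Algebra.add s x y) with (Radd x y)
 | |- context [@GRing.mul ?s ?x ?y] => change (@GRing.mul s x y) with (Rmul x y)
 | |- context [@Algebra.opp ?s ?x] => change (@Algebra.opp s x) with (Ropp x)
 | |- context [@Algebra.natmul ?s ?x ?n] => change (@Algebra.natmul s x n) with (Rnat x n)
 | |- context [@GRing.exp ?s ?x ?n] => change (@GRing.exp s x n) with (Rexp x n)
 end.
Ltac cring := canon; ring.

Lemma trinomial (A B C : R) (n K : nat) : (n < K)%N ->
  (A + B + C) ^+ n = \sum_(i < K) \sum_(k < K)
     (if (i + k <= n)%N then (tri n i k)%:R * A ^+ (n - i - k) * B ^+ i * C ^+ k else 0).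
Proof.
move=> hK; rewrite (addrAC A B C) exprDn.
rewrite (big_ord_widen K (fun i : nat => (A + C) ^+ (n - i) * B ^+ i *+ 'C(n, i))) //.
rewrite big_mkcond /=; apply: eq_bigr => i _.
case: ifP => hi.
  rewrite exprDn (big_ord_widen K (fun k : nat => A ^+ (n - i - k) * C ^+ k *+ 'C(n - i, k))); last by apply: leq_trans hK; rewrite ltnS leq_subr.
  rewrite big_mkcond /= mulr_suml -sumrMnl; apply: eq_bigr => k _.
  have hin : (i <= n)%N by rewrite -ltnS.
  rewrite ltnS leq_subRL //; case: ifP => _; last by rewrite mul0r mul0rn.
  rewrite -(mulr_natl _ 'C(n, i)) -(mulr_natl _ 'C(n - i, k)) /tri natrM.
  cring.
rewrite big1 // => k _; case: ifP => // hk.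
by move: hi; rewrite ltnS (leq_trans (leq_addr k i) hk).
Qed.

Lemma Gexpand (p0 p1 p2 a1 a2 b1 b2 c1 c2 s1 s2 t1 t2 : R) :
 p0 * ((1 + a1*s1 + a2*s2) * (1 + a1*t1 + a2*t2)) + p1 * ((1 + b1*s1 + b2*s2)*(1 + b1*t1 + b2*t2))
  + p2 * ((1 + c1*s1 + c2*s2) * (1 + c1*t1+c2*t2))
 = (p0+p1+p2) + (p0*a1+p1*b1+p2*c1)*(s1+t1) + (p0*a2+p1*b2+p2*c2)*(s2+t2)
   + (p0*a1*a1+p1*b1*b1+p2*c1*c1)*(s1*t1) + (p0*a1*a2+p1*b1*b2+p2*c1*c2)*(s1*t2+s2*t1)
   + (p0*a2*a2+p1*b2*b2+p2*c2*c2)*(s2*t2).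
Proof. cring. Qed.

Lemma Gexpand1 (p0 p1 p2 a1 a2 b1 b2 c1 c2 s1 s2 : R) :
 p0 * (1 + a1*s1 + a2*s2) + p1 * (1 + b1*s1 + b2*s2) + p2 * (1 + c1*s1 + c2*s2)
 = (p0+p1+p2) + (p0*a1+p1*b1+p2*c1)*s1 + (p0*a2+p1*b2+p2*c2)*s2.
Proof. cring. Qed.

Lemma pow1H (H : R) (N : nat) : exists Rr : R, (1 + H) ^+ N = 1 + N%:R * H + H * H * Rr.
Proof.
elim: N => [|N [Rr IH]]; first by exists 0; rewrite expr0 mulr0 addr0 mul0r addr0.
exists (N%:R + Rr + H * Rr); rewrite exprS IH -addn1 natrD mulr1n. cring.
Qed.

Lemma Wshift_ring (a b c1 c2 x y : R) :
  1 + (c1 + a) * x + (c2 + b) * y = (1 + c1 * x + c2 * y) + a * x + b * y.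
Proof. cring. Qed.

Lemma rearrA (w w1 w2 t1 t2 ca cb cc cd xi xk xj xl : R) :
  w * (t1 * w1 * (ca * xi) * (cb * xk)) * (t2 * w2 * (cc * xj) * (cd * xl))
  = (t1 * t2 * (ca * cc * cb * cd)) * (w * w1 * w2) * (xi * xj) * (xk * xl).
Proof. cring. Qed.

Lemma rearrB (t e0 e1 e2 a0 a1 a2 b0 b1 b2 : R) :
  t * e1 * e2 * e0 * (a0 * a1 * a2) * (b0 * b1 * b2)
  = t * (e0 * (a0 * b0)) * (e1 * (a1 * b1)) * (e2 * (a2 * b2)).
Proof. cring. Qed.

Lemma rearrBX (t e0 e1 e2 a0 a1 a2 b0 b1 b2 : R) (n0 n1 n2 : nat) :
  t * e1 ^+ n1 * e2 ^+ n2 * e0 ^+ n0 * (a0 ^+ n0 * a1 ^+ n1 * a2 ^+ n2) * (b0 ^+ n0 * b1 ^+ n1 * b2 ^+ n2)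
  = t * (e0 * (a0 * b0)) ^+ n0 * (e1 * (a1 * b1)) ^+ n1 * (e2 * (a2 * b2)) ^+ n2.
Proof. by rewrite !exprMn rearrB. Qed.

Lemma rearrC (t l1 l2 s1 s2 t1 t2 : R) (c a b : nat) :
  t * 1 ^+ c * (l1 * (s1 * t1)) ^+ a * (l2 * (s2 * t2)) ^+ b
  = t * l1 ^+ a * l2 ^+ b * s1 ^+ a * s2 ^+ b * t1 ^+ a * t2 ^+ b.
Proof. rewrite expr1n !exprMn. cring. Qed.

Lemma simpG (o z d1 d2 A B P Q Rr : R) : o = 1 -> z = 0 ->
  o + z * A + z * B + d1 * P + z * Q + d2 * Rr = 1 + d1 * P + d2 * Rr.
Proof. move=> -> ->; cring. Qed.

Lemma rearrD (t e0 e1 e2 a0 a1 a2 : R) (n0 n1 n2 : nat) :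
  t * e1 ^+ n1 * e2 ^+ n2 * e0 ^+ n0 * (a0 ^+ n0 * a1 ^+ n1 * a2 ^+ n2)
  = t * (e0 * a0) ^+ n0 * (e1 * a1) ^+ n1 * (e2 * a2) ^+ n2.
Proof. rewrite !exprMn. cring. Qed.

Lemma simpG2 (o z d1 d12 d2 A B P Q Rr : R) : o = 1 -> z = 0 ->
  o + z * A + z * B + d1 * P + d12 * Q + d2 * Rr = 1 + (d1 * P + d12 * Q + d2 * Rr).
Proof. move=> -> ->; cring. Qed.

Lemma simpG1 (o z1 z2 A B : R) : o = 1 ->
  o + z1 * A + z2 * B = 1 + (z1 * A + z2 * B).
Proof. by move=> ->; rewrite addrA. Qed.
End RingTac.

Section Morph.
Variables (F T : comPzRingType) (f : F -> T).
Hypotheses (fD : forall x y, f (x + y) = f x + f y) (fM : forall x y, f (x * y) = f x * f y).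
Lemma GexpandM (p0 p1 p2 a1 a2 b1 b2 c1 c2 : F) (s1 s2 t1 t2 : T) :
 f p0 * ((1 + f a1*s1 + f a2*s2) * (1 + f a1*t1 + f a2*t2)) + f p1 * ((1 + f b1*s1 + f b2*s2)*(1 + f b1*t1 + f b2*t2))
  + f p2 * ((1 + f c1*s1 + f c2*s2) * (1 + f c1*t1+ f c2*t2))
 = f (p0+p1+p2) + f (p0*a1+p1*b1+p2*c1)*(s1+t1) + f (p0*a2+p1*b2+p2*c2)*(s2+t2)
   + f (p0*a1*a1+p1*b1*b1+p2*c1*c1)*(s1*t1) + f (p0*a1*a2+p1*b1*b2+p2*c1*c2)*(s1*t2+s2*t1)
   + f (p0*a2*a2+p1*b2*b2+p2*c2*c2)*(s2*t2).
Proof. by rewrite Gexpand !fD !fM. Qed.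
Lemma Gexpand1M (p0 p1 p2 a1 a2 b1 b2 c1 c2 : F) (s1 s2 : T) :
 f p0 * (1 + f a1*s1 + f a2*s2) + f p1 * (1 + f b1*s1 + f b2*s2) + f p2 * (1 + f c1*s1 + f c2*s2)
 = f (p0+p1+p2) + f (p0*a1+p1*b1+p2*c1)*s1 + f (p0*a2+p1*b2+p2*c2)*s2.
Proof. by rewrite Gexpand1 !fD !fM. Qed.
End Morph.

Section Poly2.
Variable R : comNzRingType.
Definition coef2 (p : {poly {poly R}}) i j := p`_i`_j.
Definition X1 : {poly {poly R}} := 'X.
Definition X2 : {poly {poly R}} := ('X)%:P.
Definition cst (c : R) : {poly {poly R}} := c%:P%:P.
Definition W (a b : R) : {poly {poly R}} := 1 + cst a * X1 + cst b * X2.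

Lemma coef2_sum (K : nat) (F : 'I_K -> {poly {poly R}}) i j :
  coef2 (\sum_(k < K) F k) i j = \sum_(k < K) coef2 (F k) i j.
Proof. by rewrite /coef2 !coef_sum. Qed.

Lemma coef2D p q i j : coef2 (p + q) i j = coef2 p i j + coef2 q i j.
Proof. by rewrite /coef2 !coefD. Qed.

Lemma coef2_cst c p i j : coef2 (cst c * p) i j = c * coef2 p i j.
Proof. by rewrite /coef2 /cst !coefCM. Qed.

Lemma coef2_shift p a b i j : coef2 (p * X1 ^+ a * X2 ^+ b) i j =
  if (a <= i)%N && (b <= j)%N then coef2 p (i - a) (j - b) else 0.
Proof.
rewrite /coef2 /X1 /X2 -rmorphXn coefMC !coefMXn.
by case: (ltnP i a) => hia; case: (ltnP j b) => hjb; rewrite /= ?coef0.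
Qed.

Lemma coef2_mono c a b i j : coef2 (cst c * X1 ^+ a * X2 ^+ b) i j =
  if (i == a) && (j == b) then c else 0.
Proof.
rewrite coef2_shift /coef2 /cst.
case: (leqP a i) => hai /=; last by rewrite (ltn_eqF hai).
case: (leqP b j) => hbj /=; last by rewrite (ltn_eqF hbj) andbF.
rewrite coefC.
have -> : (i - a == 0)%N = (i == a) by rewrite subn_eq0 eqn_leq hai andbT.
case: (i == a) => /=; last by rewrite coef0.
rewrite coefC.
by have -> : (j - b == 0)%N = (j == b) by rewrite subn_eq0 eqn_leq hbj andbT.
Qed.

Lemma coef2M00 p q : coef2 (p * q) 0 0 = coef2 p 0 0 * coef2 q 0 0.
Proof. by rewrite /coef2 !coef0M. Qed.

Lemma coef2X00 p n : coef2 (p ^+ n) 0 0 = coef2 p 0 0 ^+ n.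
Proof.
elim: n => [|n IH]; first by rewrite !expr0 /coef2 !coef1.
by rewrite !exprS coef2M00 IH.
Qed.

Lemma coef2M10 p q : coef2 (p * q) 1 0 = coef2 p 0 0 * coef2 q 1 0 + coef2 p 1 0 * coef2 q 0 0.
Proof.
by rewrite /coef2 coefM !big_ord_recr big_ord0 /= add0r coefD !coef0M.
Qed.

Lemma coef2M01 p q : coef2 (p * q) 0 1 = coef2 p 0 0 * coef2 q 0 1 + coef2 p 0 1 * coef2 q 0 0.
Proof.
by rewrite /coef2 coef0M coefM !big_ord_recr big_ord0 /= add0r.
Qed.

End Poly2.
Arguments X1 {R}.
Arguments X2 {R}.

Section CF.
Variable C : numClosedFieldType.
Definition Cadd (x y : C) : C := x + y.
Definition Cmul (x y : C) : C := x * y.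
Definition Copp (x : C) : C := - x.
Definition Csub (x y : C) : C := Cadd x (Copp y).
Definition Cinv (x : C) : C := x^-1.
Definition Cdiv (x y : C) : C := Cmul x (Cinv y).
Definition Cnat (x : C) n : C := x *+ n.
Definition Cexp (x : C) n : C := x ^+ n.
Lemma CRT : @ring_theory C 0 1 Cadd Cmul Csub Copp eq.
Proof. split=> //=; rewrite /Cadd /Cmul /Csub /Copp; [exact: add0r|exact: addrC|exact: addrA|exact: mul1r|exact: mulrC|exact: mulrA|exact: mulrDl|exact: subrr]. Qed.
Lemma CFT : @field_theory C 0 1 Cadd Cmul Csub Copp Cdiv Cinv eq.
Proof. split=> //=; [exact: CRT| apply/eqP; exact: oner_neq0| move=> x H; apply: mulVf; apply/eqP; exact H]. Qed.
Add Field Cf : CFT.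
Ltac canonC := (match goal with |- @eq _ ?x ?y => change (@eq C x y) end); repeat match goal with
 | |- context [@Algebra.zero ?s] => progress change (@Algebra.zero s) with (0 : C)
 | |- context [@GRing.one ?s] => progress change (@GRing.one s) with (1 : C)
 | |- context [@Algebra.add ?s ?x ?y] => change (@Algebra.add s x y) with (Cadd x y)
 | |- context [@GRing.mul ?s ?x ?y] => change (@GRing.mul s x y) with (Cmul x y)
 | |- context [@Algebra.opp ?s ?x] => change (@Algebra.opp s x) with (Copp x)
 | |- context [@GRing.inv ?s ?x] => change (@GRing.inv s x) with (Cinv x)
 | |- context [@Algebra.natmul ?s ?x ?n] => change (@Algebra.natmul s x n) with (Cnat x n)
 | |- context [@GRing.exp ?s ?x ?n] => change (@GRing.exp s x n) with (Cexp x n)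
 end.

Lemma fact_neq0 n : (n`!)%:R != 0 :> C.
Proof. by rewrite pnatr_eq0 -lt0n fact_gt0. Qed.

Lemma sign_neq0 n : (-1) ^+ n != 0 :> C.
Proof. by rewrite signr_eq0. Qed.

Lemma poch_negS n k : (k <= n)%N ->
  poch (- n%:R : C) k * (n - k)`!%:R = (-1) ^+ k * n`!%:R.
Proof.
elim: k => [|k IH] hk; first by rewrite /poch big_ord0 subn0 expr0 !mul1r.
have hk' : (k <= n)%N by apply: ltnW.
rewrite /poch big_ord_recr /= -/(poch _ k).
have -> : - n%:R + k%:R = - ((n - k)%:R) :> C by rewrite natrB // opprB addrC.
rewrite exprS -[RHS]mulrA -(IH hk') -(subnSK hk) factS natrM.
canonC. field.
Qed.

Lemma poch_negE n k : (k <= n)%N ->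
  poch (- n%:R : C) k = (-1) ^+ k * n`!%:R / (n - k)`!%:R.
Proof.
move=> hk; rewrite -(poch_negS hk) mulfK //; exact: fact_neq0.
Qed.

Lemma poch_neg0 n k : (n < k)%N -> poch (- n%:R : C) k = 0.
Proof.
move=> hk; rewrite /poch (bigD1 (Ordinal hk)) //= addNr mul0r //.
Qed.

Lemma tri_fact n a b : (a + b <= n)%N ->
  (tri n a b)%:R = n`!%:R / (a`!%:R * b`!%:R * (n - a - b)`!%:R) :> C.
Proof.
move=> h.
have ha : (a <= n)%N by apply: leq_trans h; rewrite leq_addr.
have hb : (b <= n - a)%N by rewrite leq_subRL.
have h1 := bin_fact ha. have h2 := bin_fact hb.
apply: (canRL (mulfK _)).
  by rewrite !mulf_neq0 // fact_neq0.
rewrite -h1 -h2 /tri !natrM. canonC. ring.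
Qed.

Lemma tri_neq0 n a b : (a + b <= n)%N -> (tri n a b)%:R != 0 :> C.
Proof.
move=> h; rewrite tri_fact //; apply: mulf_neq0; first exact: fact_neq0.
by rewrite invr_eq0 !mulf_neq0 // fact_neq0.
Qed.


Lemma term_id N m1 m2 x1 x2 i j k l (u1 v1 u2 v2 : C) : (x1 + x2 <= N)%N -> (m1 + m2 <= N)%N ->
 (if [&& (i + k <= x1)%N, (j + l <= x2)%N, (i + j <= m1)%N & (k + l <= m2)%N] then
   (tri x1 i k)%:R * (tri x2 j l)%:R * (tri (N - (i + j + k + l)) (m1 - (i + j)) (m2 - (k + l)))%:R
   * ((-u1) ^+ i * (-v1) ^+ j * (-u2) ^+ k * (-v2) ^+ l) else 0)
 = (tri N m1 m2)%:R * (if (i + j + k + l <= N)%N then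
      poch (- m1%:R) (i + j) * poch (- m2%:R) (k + l) * poch (- x1%:R) (i + k) * poch (- x2%:R) (j + l)
      / ((i`! * j`! * k`! * l`!)%:R * poch (- N%:R) (i + j + k + l)) * u1 ^+ i * v1 ^+ j * u2 ^+ k * v2 ^+ l
    else 0).
Proof.
move=> hx hm.
case: (leqP (i + k) x1) => h1; last by rewrite /= (poch_neg0 h1); case: ifP; rewrite ?(mul0r, mulr0).
case: (leqP (j + l) x2) => h2; last by rewrite /= (poch_neg0 h2); case: ifP; rewrite ?(mul0r, mulr0).
case: (leqP (i + j) m1) => h3; last by rewrite /= (poch_neg0 h3); case: ifP; rewrite ?(mul0r, mulr0).
case: (leqP (k + l) m2) => h4; last by rewrite /= (poch_neg0 h4); case: ifP; rewrite ?(mul0r, mulr0).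
have hs : (i + j + k + l <= N)%N by nlia.
rewrite /= hs.
rewrite (poch_negE h1) (poch_negE h2) (poch_negE h3) (poch_negE h4) (poch_negE hs).
rewrite (tri_fact h1) (tri_fact h2) (tri_fact hm).
rewrite tri_fact; last by nlia.
have -> : (N - (i + j + k + l) - (m1 - (i + j)) - (m2 - (k + l)) = N - m1 - m2)%N by nlia.
rewrite -[(x1 - i - k)%N]subnDA -[(x2 - j - l)%N]subnDA.
rewrite (exprNn u1) (exprNn v1) (exprNn u2) (exprNn v2) !exprD !natrM.
canonC. field.
rewrite /Cnat /Cexp /Copp; repeat split; apply/eqP; first [exact: fact_neq0 | exact: sign_neq0].
Qed.
End CF.



Section Main.
Variable C : numClosedFieldType.

Lemma sum_if_eq (T : nmodType) (K a : nat) (G : nat -> T) :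
  \sum_(i < K) (if (i == a :> nat) then G i else 0) = if (a < K)%N then G a else 0.
Proof. by rewrite -big_mkcond big_ord1_eq. Qed.

Lemma sum_pick (T : nmodType) (K a b : nat) (P : nat -> nat -> bool) (F : nat -> nat -> T) :
  \sum_(i < K) \sum_(k < K) (if P i k then (if (a == i) && (b == k) then F i k else 0) else 0)
  = if [&& (a < K)%N, (b < K)%N & P a b] then F a b else 0.
Proof.
have -> : \sum_(i < K) \sum_(k < K) (if P i k then (if (a == i) && (b == k) then F i k else 0) else 0)
  = \sum_(i < K) (if (i == a :> nat) then \sum_(k < K) (if (k == b :> nat) then (if P a b then F a b else 0) else 0) else 0).
  apply: eq_bigr => i _; case: (eqVneq (i : nat) a) => [ia|nia] /=.
    rewrite ia; apply: eq_bigr => k _; case: (eqVneq (k : nat) b) => [kb|nkb] /=; first by rewrite kb.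
    by case: ifP.
  by rewrite big1 // => k _; case: ifP.
rewrite (sum_if_eq K a (fun=> \sum_(k < K) (if (k == b :> nat) then (if P a b then F a b else 0) else 0))).
rewrite (sum_if_eq K b (fun=> if P a b then F a b else 0)).
by case: (a < K)%N; case: (b < K)%N; case: (P a b).
Qed.

Lemma cst1 (R : comNzRingType) : cst (1 : R) = 1.
Proof. by rewrite /cst !rmorph1. Qed.
Lemma cstM (R : comNzRingType) (a b : R) : cst (a * b) = cst a * cst b.
Proof. by rewrite /cst !rmorphM. Qed.
Lemma cstD (R : comNzRingType) (a b : R) : cst (a + b) = cst a + cst b.
Proof. by rewrite /cst !rmorphD. Qed.
Lemma cstX (R : comNzRingType) (a : R) n : cst (a ^+ n) = cst a ^+ n.
Proof. by rewrite /cst !rmorphXn. Qed.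
Lemma cst_nat (R : comNzRingType) n : cst (n%:R : R) = n%:R.
Proof. by rewrite /cst !rmorph_nat. Qed.

Lemma coef2_sum2 (R : comNzRingType) (K : nat) (F : 'I_K -> 'I_K -> {poly {poly R}}) i j :
  coef2 (\sum_(a < K) \sum_(b < K) F a b) i j = \sum_(a < K) \sum_(b < K) coef2 (F a b) i j.
Proof. rewrite coef2_sum; apply: eq_bigr => a _; exact: coef2_sum. Qed.

Lemma coef2_if (R : comNzRingType) (c : bool) (p : {poly {poly R}}) i j :
  coef2 (if c then p else 0) i j = if c then coef2 p i j else 0.
Proof. by case: c => //; rewrite /coef2 !coef0. Qed.

Lemma coefW0 (R : comNzRingType) M a b : coef2 (W (1 : R) 1 ^+ M) a b =
  if (a + b <= M)%N then (tri M a b)%:R else 0.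
Proof.
rewrite /W !cst1 !mul1r (trinomial _ _ _ (ltnSn M)) coef2_sum2.
have -> : \sum_(i < M.+1) \sum_(k < M.+1) coef2 (if (i + k <= M)%N then (tri M i k)%:R * 1 ^+ (M - i - k) * X1 ^+ i * X2 ^+ k else 0) a b
  = \sum_(i < M.+1) \sum_(k < M.+1) (if (i + k <= M)%N then (if (a == i) && (b == k) then ((tri M i k)%:R : R) else 0) else 0).
  apply: eq_bigr => i _; apply: eq_bigr => k _; rewrite coef2_if; case: ifP => // _.
  by rewrite expr1n mulr1 -cst_nat coef2_mono.
rewrite (sum_pick M.+1 a b (fun i k => (i + k <= M)%N) (fun i k => ((tri M i k)%:R : R))) /=; case: (leqP (a + b) M) => h; last by rewrite !andbF.
have -> : (a < M.+1)%N by rewrite ltnS (leq_trans (leq_addr b a) h).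
by have -> : (b < M.+1)%N by rewrite ltnS (leq_trans (leq_addl a b) h).
Qed.


Lemma sum4 (R : comNzRingType) K (w : R) (F G : 'I_K -> 'I_K -> R) :
  w * (\sum_(i < K) \sum_(k < K) F i k) * (\sum_(j < K) \sum_(l < K) G j l)
  = \sum_(i < K) \sum_(j < K) \sum_(k < K) \sum_(l < K) (w * F i k * G j l).
Proof.
rewrite [w * _]mulr_sumr mulr_suml; apply: eq_bigr => i _.
rewrite [w * _]mulr_sumr mulr_suml [RHS]exchange_big /=; apply: eq_bigr => k _.
rewrite mulr_sumr; apply: eq_bigr => j _.
by rewrite mulr_sumr.
Qed.

Definition q N (u1 v1 u2 v2 : C) x1 x2 : {poly {poly C}} :=
  W 1 1 ^+ (N - x1 - x2) * W (1 - u1) (1 - u2) ^+ x1 * W (1 - v1) (1 - v2) ^+ x2.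

Lemma W_shift (a b : C) : W (1 - a) (1 - b) = W 1 1 + cst (- a) * X1 + cst (- b) * X2.
Proof. by rewrite /W !cstD Wshift_ring. Qed.

Lemma q_coef N u1 v1 u2 v2 x1 x2 m1 m2 : (x1 + x2 <= N)%N -> (m1 + m2 <= N)%N ->
  coef2 (q N u1 v1 u2 v2 x1 x2) m1 m2 = (tri N m1 m2)%:R * Kraw2 N u1 v1 u2 v2 m1 m2 x1 x2.
Proof.
move=> hx hm.
have hx1 : (x1 < N.+1)%N by nlia.
have hx2 : (x2 < N.+1)%N by nlia.
rewrite /q !W_shift (trinomial _ _ _ hx1) (trinomial _ _ _ hx2) sum4.
rewrite coef2_sum /Kraw2 mulr_sumr; apply: eq_bigr => i _.
rewrite coef2_sum mulr_sumr; apply: eq_bigr => j _.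
rewrite coef2_sum mulr_sumr; apply: eq_bigr => k _.
rewrite coef2_sum mulr_sumr; apply: eq_bigr => l _.
rewrite -(term_id i j k l u1 v1 u2 v2 hx hm).
case: ifP => h1; last by rewrite mulr0 mul0r /coef2 !coef0.
case: ifP => h2; last by rewrite mulr0 /coef2 !coef0.
rewrite /= !exprMn rearrA -!cst_nat -!cstX -!cstM -!exprD.
have -> : (N - x1 - x2 + (x1 - i - k) + (x2 - j - l) = N - (i + j + k + l))%N by nlia.
rewrite coef2_shift coef2_cst coefW0.
case: ifP => h3 //=.
have -> : (m1 - (i + j) + (m2 - (k + l)) <= N - (i + j + k + l))%N by nlia.
by rewrite mulrAC.
Qed.

Local Notation R2 := {poly {poly C}}.
Definition lift : C -> R2 := polyC \o polyC.
Definition phi (p : {poly {poly C}}) : {poly {poly R2}} := map_poly (map_poly lift) p.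
Lemma phiM p r : phi (p * r) = phi p * phi r.
Proof. rewrite /phi rmorphM. done. Qed.
Lemma phiX p n : phi (p ^+ n) = phi p ^+ n.
Proof. by rewrite /phi rmorphXn. Qed.
Lemma phiD p r : phi (p + r) = phi p + phi r.
Proof. by rewrite /phi rmorphD. Qed.
Lemma phi1 : phi 1 = 1.
Proof. by rewrite /phi rmorph1. Qed.
Lemma phiC c : phi (cst c) = cst (cst c : R2).
Proof. rewrite /phi /cst map_polyC /= map_polyC. done. Qed.
Lemma phiX1 : phi X1 = X1.
Proof. by rewrite /phi /X1 map_polyX. Qed.
Lemma phiX2 : phi X2 = X2.
Proof. by rewrite /phi /X2 map_polyC /= map_polyX. Qed.
Lemma phiW a b : phi (W a b) = W (cst a : R2) (cst b).
Proof. by rewrite /W !phiD !phiM phi1 !phiC phiX1 phiX2. Qed.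
Lemma coef2_phi p i j : coef2 (phi p) i j = cst (coef2 p i j).
Proof.
rewrite /coef2 /phi coef_map_id0; last by rewrite map_poly0.
by rewrite coef_map_id0 // /lift /= !rmorph0.
Qed.
Lemma cstW (R : comNzRingType) (a b : R) :
  cst (W a b) = 1 + cst (cst a) * cst X1 + cst (cst b) * cst X2.
Proof. by rewrite /W !cstD !cstM cst1. Qed.

Lemma trinomE N x1 x2 (e1 e2 : C) : (x1 + x2 <= N)%N ->
  trinom N x1 x2 e1 e2 = (tri N x1 x2)%:R * e1 ^+ x1 * e2 ^+ x2 * (1 - e1 - e2) ^+ (N - x1 - x2).
Proof. by move=> h; rewrite /trinom (natrM _ (x1`! * x2`!)) (natrM _ x1`!) -(tri_fact _ h). Qed.

Definition Zs N (e1 e2 u1 v1 u2 v2 : C) : {poly {poly R2}} :=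
  \sum_(x1 < N.+1) \sum_(x2 < N.+1) (if (x1 + x2 <= N)%N then
     cst (cst (trinom N x1 x2 e1 e2)) * cst (q N u1 v1 u2 v2 x1 x2) * phi (q N u1 v1 u2 v2 x1 x2) else 0).

Lemma Z_coef N (e1 e2 u1 v1 u2 v2 : C) m1 m2 n1 n2 :
  coef2 (coef2 (Zs N e1 e2 u1 v1 u2 v2) n1 n2) m1 m2 =
  \sum_(x1 < N.+1) \sum_(x2 < N.+1) (if (x1 + x2 <= N)%N then
     trinom N x1 x2 e1 e2 * coef2 (q N u1 v1 u2 v2 x1 x2) m1 m2 * coef2 (q N u1 v1 u2 v2 x1 x2) n1 n2 else 0).
Proof.
rewrite /Zs coef2_sum2 coef2_sum2; apply: eq_bigr => x1 _; apply: eq_bigr => x2 _.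
rewrite !coef2_if; case: ifP => // _.
rewrite -mulrA coef2_cst coef2_cst coef2_phi coef2_cst.
by rewrite [q _ _ _ _ _ _ _ * _]mulrC coef2_cst mulrA mulrAC.
Qed.

Lemma Z_closed N (e1 e2 u1 v1 u2 v2 : C) :
  Zs N e1 e2 u1 v1 u2 v2 =
   (cst (cst (1 - e1 - e2)) * (cst (W 1 1) * phi (W 1 1))
    + cst (cst e1) * (cst (W (1 - u1) (1 - u2)) * phi (W (1 - u1) (1 - u2)))
    + cst (cst e2) * (cst (W (1 - v1) (1 - v2)) * phi (W (1 - v1) (1 - v2)))) ^+ N.
Proof.
rewrite (trinomial _ _ _ (ltnSn N)) /Zs; apply: eq_bigr => x1 _; apply: eq_bigr => x2 _.
case: ifP => // h.
rewrite (trinomE _ _ h) /q 8!cstM 9!cstX 2!phiM 3!phiX.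
have E : ((tri N x1 x2)%:R : {poly {poly R2}}) = cst (cst (tri N x1 x2)%:R) by rewrite /cst !rmorph_nat.
rewrite E; exact: rearrBX.
Qed.

End Main.



Section Fin.
Variable C : numClosedFieldType.
Definition Dadd (x y : C) : C := x + y.
Definition Dmul (x y : C) : C := x * y.
Definition Dopp (x : C) : C := - x.
Definition Dsub (x y : C) : C := Dadd x (Dopp y).
Definition Dinv (x : C) : C := x^-1.
Definition Ddiv (x y : C) : C := Dmul x (Dinv y).
Definition Dnat (x : C) n : C := x *+ n.
Definition Dexp (x : C) n : C := x ^+ n.
Lemma DRT : @ring_theory C 0 1 Dadd Dmul Dsub Dopp eq.
Proof. split=> //=; rewrite /Dadd /Dmul /Dsub /Dopp; [exact: add0r|exact: addrC|exact: addrA|exact: mul1r|exact: mulrC|exact: mulrA|exact: mulrDl|exact: subrr]. Qed.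
Lemma DFT : @field_theory C 0 1 Dadd Dmul Dsub Dopp Ddiv Dinv eq.
Proof. split=> //=; [exact: DRT| apply/eqP; exact: oner_neq0| move=> x H; apply: mulVf; apply/eqP; exact H]. Qed.
Add Field Df : DFT.
Ltac canonD := (match goal with |- @eq _ ?x ?y => change (@eq C x y) end); repeat match goal with
 | |- context [@Algebra.zero ?s] => progress change (@Algebra.zero s) with (0 : C)
 | |- context [@GRing.one ?s] => progress change (@GRing.one s) with (1 : C)
 | |- context [@Algebra.add ?s ?x ?y] => change (@Algebra.add s x y) with (Dadd x y)
 | |- context [@GRing.mul ?s ?x ?y] => change (@GRing.mul s x y) with (Dmul x y)
 | |- context [@Algebra.opp ?s ?x] => change (@Algebra.opp s x) with (Dopp x)
 | |- context [@GRing.inv ?s ?x] => change (@GRing.inv s x) with (Dinv x)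
 | |- context [@Algebra.natmul ?s ?x ?n] => change (@Algebra.natmul s x n) with (Dnat x n)
 | |- context [@GRing.exp ?s ?x ?n] => change (@GRing.exp s x n) with (Dexp x n)
 end.

Local Notation S := {poly {poly {poly {poly C}}}}.
Definition L (c : C) : S := cst (cst c).
Lemma LM a b : L a * L b = L (a * b).
Proof. by rewrite /L !cstM. Qed.
Lemma LD a b : L a + L b = L (a + b).
Proof. by rewrite /L !cstD. Qed.
Lemma L1 : L 1 = 1.
Proof. by rewrite /L !cst1. Qed.
Lemma L0 : L 0 = 0.
Proof. by rewrite /L /cst !polyC0. Qed.

Definition GG (e1 e2 u1 v1 u2 v2 : C) : S :=
   L (1 - e1 - e2) * (cst (W 1 1) * phi (W 1 1))
    + L e1 * (cst (W (1 - u1) (1 - u2)) * phi (W (1 - u1) (1 - u2)))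
    + L e2 * (cst (W (1 - v1) (1 - v2)) * phi (W (1 - v1) (1 - v2))).

Lemma GG_form (e1 e2 u1 v1 u2 v2 : C) :
  GG e1 e2 u1 v1 u2 v2 =
   L ((1 - e1 - e2) + e1 + e2)
   + L ((1 - e1 - e2) * 1 + e1 * (1 - u1) + e2 * (1 - v1)) * (cst X1 + X1)
   + L ((1 - e1 - e2) * 1 + e1 * (1 - u2) + e2 * (1 - v2)) * (cst X2 + X2)
   + L ((1 - e1 - e2) * 1 * 1 + e1 * (1 - u1) * (1 - u1) + e2 * (1 - v1) * (1 - v1)) * (cst X1 * X1)
   + L ((1 - e1 - e2) * 1 * 1 + e1 * (1 - u1) * (1 - u2) + e2 * (1 - v1) * (1 - v2)) * (cst X1 * X2 + cst X2 * X1)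
   + L ((1 - e1 - e2) * 1 * 1 + e1 * (1 - u2) * (1 - u2) + e2 * (1 - v2) * (1 - v2)) * (cst X2 * X2).
Proof.
rewrite /GG 3!cstW 3!phiW /W.
rewrite (@GexpandM _ _ L (fun a b => esym (LD a b)) (fun a b => esym (LM a b)) (1 - e1 - e2) e1 e2 1 1 (1 - u1) (1 - u2) (1 - v1) (1 - v2) (cst X1) (cst X2) X1 X2).
done.
Qed.

End Fin.



Section Fin2.
Variable C : numClosedFieldType.
Definition Eadd (x y : C) : C := x + y.
Definition Emul (x y : C) : C := x * y.
Definition Eopp (x : C) : C := - x.
Definition Esub (x y : C) : C := Eadd x (Eopp y).
Definition Einv (x : C) : C := x^-1.
Definition Ediv (x y : C) : C := Emul x (Einv y).
Definition Enat (x : C) n : C := x *+ n.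
Definition Eexp (x : C) n : C := x ^+ n.
Lemma ERT : @ring_theory C 0 1 Eadd Emul Esub Eopp eq.
Proof. split=> //=; rewrite /Eadd /Emul /Esub /Eopp; [exact: add0r|exact: addrC|exact: addrA|exact: mul1r|exact: mulrC|exact: mulrA|exact: mulrDl|exact: subrr]. Qed.
Lemma EFT : @field_theory C 0 1 Eadd Emul Esub Eopp Ediv Einv eq.
Proof. split=> //=; [exact: ERT| apply/eqP; exact: oner_neq0| move=> x H; apply: mulVf; apply/eqP; exact H]. Qed.
Add Field Ef : EFT.
Ltac canonE := (match goal with |- @eq _ ?x ?y => change (@eq C x y) end); repeat match goal with
 | |- context [@Algebra.zero ?s] => progress change (@Algebra.zero s) with (0 : C)
 | |- context [@GRing.one ?s] => progress change (@GRing.one s) with (1 : C)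
 | |- context [@Algebra.add ?s ?x ?y] => change (@Algebra.add s x y) with (Eadd x y)
 | |- context [@GRing.mul ?s ?x ?y] => change (@GRing.mul s x y) with (Emul x y)
 | |- context [@Algebra.opp ?s ?x] => change (@Algebra.opp s x) with (Eopp x)
 | |- context [@GRing.inv ?s ?x] => change (@GRing.inv s x) with (Einv x)
 | |- context [@Algebra.natmul ?s ?x ?n] => change (@Algebra.natmul s x n) with (Enat x n)
 | |- context [@GRing.exp ?s ?x ?n] => change (@GRing.exp s x n) with (Eexp x n)
 end.
Local Notation S := {poly {poly {poly {poly C}}}}.

Lemma diag_coef N (a b : C) m1 m2 n1 n2 : (m1, m2) <> (n1, n2) ->
  coef2 (coef2 ((1 + L a * (cst X1 * X1) + L b * (cst X2 * X2)) ^+ N) n1 n2) m1 m2 = 0.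
Proof.
move=> hmn.
rewrite (trinomial _ _ _ (ltnSn N)) coef2_sum2 coef2_sum2.
apply: big1 => i _; apply: big1 => k _.
rewrite !coef2_if; case: ifP => // _.
rewrite rearrC.
have -> : ((tri N i k)%:R : S) * L a ^+ i * L b ^+ k * cst X1 ^+ i * cst X2 ^+ k * X1 ^+ i * X2 ^+ k
  = cst (cst ((tri N i k)%:R * a ^+ i * b ^+ k) * X1 ^+ i * X2 ^+ k) * X1 ^+ i * X2 ^+ k.
  by rewrite /L !cstM !cstX /cst !rmorph_nat.
rewrite coef2_mono.
case: (n1 == i) / eqP => hn1 //=; last by rewrite /coef2 !coef0.
case: (n2 == k) / eqP => hn2 //=; last by rewrite /coef2 !coef0.
rewrite coef2_mono.
case: (m1 == i) / eqP => hm1 //=.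
case: (m2 == k) / eqP => hm2 //=.
by exfalso; apply: hmn; rewrite hm1 hm2 hn1 hn2.
Qed.

Lemma suff_main N (e1 e2 u1 v1 u2 v2 : C) m1 m2 n1 n2 :
  e1 * u1 + e2 * v1 = 1 -> e1 * u2 + e2 * v2 = 1 -> e1 * u1 * u2 + e2 * v1 * v2 = 1 ->
  (m1, m2) <> (n1, n2) ->
  coef2 (coef2 (Zs N e1 e2 u1 v1 u2 v2) n1 n2) m1 m2 = 0.
Proof.
move=> ha hb hc hmn.
have -> : Zs N e1 e2 u1 v1 u2 v2 = GG e1 e2 u1 v1 u2 v2 ^+ N by rewrite Z_closed.
rewrite GG_form.
have -> : 1 - e1 - e2 + e1 + e2 = 1 by canonE; ring.
have -> : (1 - e1 - e2) * 1 + e1 * (1 - u1) + e2 * (1 - v1) = 0.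
  have -> : (1 - e1 - e2) * 1 + e1 * (1 - u1) + e2 * (1 - v1) = 1 - (e1 * u1 + e2 * v1) by canonE; ring.
  by rewrite ha subrr.
have -> : (1 - e1 - e2) * 1 + e1 * (1 - u2) + e2 * (1 - v2) = 0.
  have -> : (1 - e1 - e2) * 1 + e1 * (1 - u2) + e2 * (1 - v2) = 1 - (e1 * u2 + e2 * v2) by canonE; ring.
  by rewrite hb subrr.
have -> : (1 - e1 - e2) * 1 * 1 + e1 * (1 - u1) * (1 - u2) + e2 * (1 - v1) * (1 - v2) = 0.
  have -> : (1 - e1 - e2) * 1 * 1 + e1 * (1 - u1) * (1 - u2) + e2 * (1 - v1) * (1 - v2)
    = 1 - (e1 * u1 + e2 * v1) - (e1 * u2 + e2 * v2) + (e1 * u1 * u2 + e2 * v1 * v2) by canonE; ring.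
  by rewrite ha hb hc subrr sub0r addNr.
set d1 := L (_ + _ + _ * (1 - v1) * (1 - v1)).
set d2 := L (_ + _ + _ * (1 - v2) * (1 - v2)).
rewrite (simpG _ _ _ _ _ _ _ (@L1 C) (@L0 C)).
exact: diag_coef.
Qed.

End Fin2.



Section Fin3.
Variable C : numClosedFieldType.
Definition Fadd (x y : C) : C := x + y.
Definition Fmul (x y : C) : C := x * y.
Definition Fopp (x : C) : C := - x.
Definition Fsub (x y : C) : C := Fadd x (Fopp y).
Definition Finv (x : C) : C := x^-1.
Definition Fdiv (x y : C) : C := Fmul x (Finv y).
Definition Fnat (x : C) n : C := x *+ n.
Definition Fexp (x : C) n : C := x ^+ n.
Lemma FRT : @ring_theory C 0 1 Fadd Fmul Fsub Fopp eq.
Proof. split=> //=; rewrite /Fadd /Fmul /Fsub /Fopp; [exact: add0r|exact: addrC|exact: addrA|exact: mul1r|exact: mulrC|exact: mulrA|exact: mulrDl|exact: subrr]. Qed.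
Lemma FFT : @field_theory C 0 1 Fadd Fmul Fsub Fopp Fdiv Finv eq.
Proof. split=> //=; [exact: FRT| apply/eqP; exact: oner_neq0| move=> x H; apply: mulVf; apply/eqP; exact H]. Qed.
Add Field Ff : FFT.
Ltac canonF := (match goal with |- @eq _ ?x ?y => change (@eq C x y) end); repeat match goal with
 | |- context [@Algebra.zero ?s] => progress change (@Algebra.zero s) with (0 : C)
 | |- context [@GRing.one ?s] => progress change (@GRing.one s) with (1 : C)
 | |- context [@Algebra.add ?s ?x ?y] => change (@Algebra.add s x y) with (Fadd x y)
 | |- context [@GRing.mul ?s ?x ?y] => change (@GRing.mul s x y) with (Fmul x y)
 | |- context [@Algebra.opp ?s ?x] => change (@Algebra.opp s x) with (Fopp x)
 | |- context [@GRing.inv ?s ?x] => change (@GRing.inv s x) with (Finv x)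
 | |- context [@Algebra.natmul ?s ?x ?n] => change (@Algebra.natmul s x n) with (Fnat x n)
 | |- context [@GRing.exp ?s ?x ?n] => change (@GRing.exp s x n) with (Fexp x n)
 end.
Local Notation S := {poly {poly {poly {poly C}}}}.

Lemma coef2X1 (R : comNzRingType) i j : coef2 (X1 : {poly {poly R}}) i j = ((i == 1%N) && (j == 0%N))%:R.
Proof. rewrite /coef2 /X1 coefX; case: (i == 1%N); by rewrite /= ?coef1 ?coef0. Qed.
Lemma coef2X2 (R : comNzRingType) i j : coef2 (X2 : {poly {poly R}}) i j = ((i == 0%N) && (j == 1%N))%:R.
Proof. rewrite /coef2 /X2 coefC; case: (i == 0%N); by rewrite /= ?coefX ?coef0. Qed.
Lemma coef2_1 (R : comNzRingType) i j : coef2 (1 : {poly {poly R}}) i j = ((i == 0%N) && (j == 0%N))%:R.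
Proof. rewrite /coef2 coef1; case: (i == 0%N); by rewrite /= ?coef1 ?coef0. Qed.
Lemma coef2_natM (R : comNzRingType) n (p : {poly {poly R}}) i j : coef2 (n%:R * p) i j = n%:R * coef2 p i j.
Proof. by rewrite -(cst_nat R n) coef2_cst. Qed.

Lemma low_pow (R : comNzRingType) (H : {poly {poly R}}) N : coef2 H 0 0 = 0 ->
  coef2 ((1 + H) ^+ N) 1 0 = N%:R * coef2 H 1 0 /\ coef2 ((1 + H) ^+ N) 0 1 = N%:R * coef2 H 0 1.
Proof.
move=> h0; have [Rr ->] := pow1H H N.
have hh : coef2 (H * H) 0 0 = 0 by rewrite coef2M00 h0 mul0r.
rewrite !coef2D !coef2_natM !coef2_1 /= add0r add0r; split.
  by rewrite coef2M10 hh (coef2M10 H H) h0 !(mul0r, mulr0, addr0, add0r).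
by rewrite coef2M01 hh (coef2M01 H H) h0 !(mul0r, mulr0, addr0, add0r).
Qed.

Lemma coefW00 (R : comNzRingType) (a b : R) : coef2 (W a b) 0 0 = 1.
Proof. by rewrite /W !coef2D !coef2_cst coef2_1 coef2X1 coef2X2 /= !mulr0 !addr0. Qed.

Lemma q00 N (u1 v1 u2 v2 : C) x1 x2 : coef2 (q N u1 v1 u2 v2 x1 x2) 0 0 = 1.
Proof. by rewrite /q !coef2M00 !coef2X00 !coefW00 !expr1n !mulr1. Qed.

Definition Z1 N (e1 e2 u1 v1 u2 v2 : C) : {poly {poly C}} :=
  \sum_(x1 < N.+1) \sum_(x2 < N.+1) (if (x1 + x2 <= N)%N then
     cst (trinom N x1 x2 e1 e2) * q N u1 v1 u2 v2 x1 x2 else 0).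

Lemma Z1_coef N (e1 e2 u1 v1 u2 v2 : C) i j : coef2 (Z1 N e1 e2 u1 v1 u2 v2) i j =
  \sum_(x1 < N.+1) \sum_(x2 < N.+1) (if (x1 + x2 <= N)%N then
     trinom N x1 x2 e1 e2 * coef2 (q N u1 v1 u2 v2 x1 x2) i j else 0).
Proof.
rewrite /Z1 coef2_sum2; apply: eq_bigr => x1 _; apply: eq_bigr => x2 _.
by rewrite coef2_if coef2_cst.
Qed.

Lemma Z1_closed N (e1 e2 u1 v1 u2 v2 : C) : Z1 N e1 e2 u1 v1 u2 v2 =
  (cst (1 - e1 - e2) * W 1 1 + cst e1 * W (1 - u1) (1 - u2) + cst e2 * W (1 - v1) (1 - v2)) ^+ N.
Proof.
rewrite (trinomial _ _ _ (ltnSn N)) /Z1; apply: eq_bigr => x1 _; apply: eq_bigr => x2 _.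
case: ifP => // h.
rewrite (trinomE _ _ h) /q 3!cstM 3!cstX.
have E : ((tri N x1 x2)%:R : {poly {poly C}}) = cst (tri N x1 x2)%:R by rewrite cst_nat.
rewrite E; exact: rearrD.
Qed.

Lemma orth_coef N (e1 e2 u1 v1 u2 v2 : C) m1 m2 n1 n2 : (m1 + m2 <= N)%N -> (n1 + n2 <= N)%N ->
  (\sum_(x1 < N.+1) \sum_(x2 < N.+1)
      (if (x1 + x2 <= N)%N then
         trinom N x1 x2 e1 e2 * Kraw2 N u1 v1 u2 v2 m1 m2 x1 x2
         * Kraw2 N u1 v1 u2 v2 n1 n2 x1 x2
       else 0)) * ((tri N m1 m2)%:R * (tri N n1 n2)%:R)
  = \sum_(x1 < N.+1) \sum_(x2 < N.+1) (if (x1 + x2 <= N)%N then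
     trinom N x1 x2 e1 e2 * coef2 (q N u1 v1 u2 v2 x1 x2) m1 m2 * coef2 (q N u1 v1 u2 v2 x1 x2) n1 n2 else 0).
Proof.
move=> hm hn; rewrite mulr_suml; apply: eq_bigr => x1 _; rewrite mulr_suml; apply: eq_bigr => x2 _.
case: ifP => h; last by rewrite mul0r.
rewrite (q_coef u1 v1 u2 v2 h hm) (q_coef u1 v1 u2 v2 h hn).
canonF; ring.
Qed.

Lemma G1_form (e1 e2 u1 v1 u2 v2 : C) :
 cst (1 - e1 - e2) * W 1 1 + cst e1 * W (1 - u1) (1 - u2) + cst e2 * W (1 - v1) (1 - v2) =
 cst (1 - e1 - e2 + e1 + e2) + cst ((1 - e1 - e2) * 1 + e1 * (1 - u1) + e2 * (1 - v1)) * X1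
   + cst ((1 - e1 - e2) * 1 + e1 * (1 - u2) + e2 * (1 - v2)) * X2.
Proof.
rewrite /W.
by rewrite (@Gexpand1M _ _ (@cst C) (@cstD C) (@cstM C)
   (1 - e1 - e2) e1 e2 1 1 (1 - u1) (1 - u2) (1 - v1) (1 - v2) X1 X2).
Qed.

Lemma Z1_low N (e1 e2 u1 v1 u2 v2 : C) :
  coef2 (Z1 N e1 e2 u1 v1 u2 v2) 1 0 = N%:R * (1 - (e1 * u1 + e2 * v1)) /\
  coef2 (Z1 N e1 e2 u1 v1 u2 v2) 0 1 = N%:R * (1 - (e1 * u2 + e2 * v2)).
Proof.
rewrite Z1_closed G1_form.
have -> : 1 - e1 - e2 + e1 + e2 = 1 by canonF; ring.
have -> : (1 - e1 - e2) * 1 + e1 * (1 - u1) + e2 * (1 - v1) = 1 - (e1 * u1 + e2 * v1) by canonF; ring.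
have -> : (1 - e1 - e2) * 1 + e1 * (1 - u2) + e2 * (1 - v2) = 1 - (e1 * u2 + e2 * v2) by canonF; ring.
rewrite cst1 (simpG1 _ _ _ _ (erefl 1)).
set a := 1 - _; set b := 1 - _.
have h0 : coef2 (cst a * X1 + cst b * X2) 0 0 = 0.
  by rewrite coef2D !coef2_cst coef2X1 coef2X2 /= !mulr0 addr0.
have [-> ->] := low_pow N h0.
by rewrite !coef2D !coef2_cst !coef2X1 !coef2X2 /= !mulr0 !mulr1 addr0 add0r.
Qed.

Lemma coef2_cc (a : C) (Y : {poly {poly C}}) (Z : S) i j :
  coef2 (cst (cst a) * (cst Y * Z)) i j = cst a * Y * coef2 Z i j.
Proof. by rewrite mulrA -(cstM (cst a) Y) coef2_cst. Qed.

Lemma coef2_cc2 (a : C) (Y1 Y2 : {poly {poly C}}) (Z1 Z2 : S) i j :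
  coef2 (cst (cst a) * (cst Y1 * Z1 + cst Y2 * Z2)) i j = cst a * Y1 * coef2 Z1 i j + cst a * Y2 * coef2 Z2 i j.
Proof. by rewrite mulrDr coef2D !coef2_cc. Qed.

Lemma coef2_H (d1 d12 d2 : C) (Y1 Y2 : {poly {poly C}}) (Z1 Z2 : S) i j :
  coef2 (cst (cst d1) * (cst Y1 * Z1) + cst (cst d12) * (cst Y1 * Z2 + cst Y2 * Z1) + cst (cst d2) * (cst Y2 * Z2)) i j
  = cst d1 * Y1 * coef2 Z1 i j + (cst d12 * Y1 * coef2 Z2 i j + cst d12 * Y2 * coef2 Z1 i j) + cst d2 * Y2 * coef2 Z2 i j.
Proof. by rewrite !coef2D coef2_cc2 !coef2_cc. Qed.

Lemma Zs_low N (e1 e2 u1 v1 u2 v2 : C) :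
  e1 * u1 + e2 * v1 = 1 -> e1 * u2 + e2 * v2 = 1 ->
  coef2 (coef2 (Zs N e1 e2 u1 v1 u2 v2) 0 1) 1 0 = N%:R * (e1 * u1 * u2 + e2 * v1 * v2 - 1).
Proof.
move=> ha hb.
have -> : Zs N e1 e2 u1 v1 u2 v2 = GG e1 e2 u1 v1 u2 v2 ^+ N by rewrite Z_closed.
rewrite GG_form.
have -> : 1 - e1 - e2 + e1 + e2 = 1 by canonF; ring.
have -> : (1 - e1 - e2) * 1 + e1 * (1 - u1) + e2 * (1 - v1) = 0.
  have -> : (1 - e1 - e2) * 1 + e1 * (1 - u1) + e2 * (1 - v1) = 1 - (e1 * u1 + e2 * v1) by canonF; ring.
  by rewrite ha subrr.
have -> : (1 - e1 - e2) * 1 + e1 * (1 - u2) + e2 * (1 - v2) = 0.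
  have -> : (1 - e1 - e2) * 1 + e1 * (1 - u2) + e2 * (1 - v2) = 1 - (e1 * u2 + e2 * v2) by canonF; ring.
  by rewrite hb subrr.
have -> : (1 - e1 - e2) * 1 * 1 + e1 * (1 - u1) * (1 - u2) + e2 * (1 - v1) * (1 - v2)
    = e1 * u1 * u2 + e2 * v1 * v2 - 1.
  have -> : (1 - e1 - e2) * 1 * 1 + e1 * (1 - u1) * (1 - u2) + e2 * (1 - v1) * (1 - v2)
    = 1 - (e1 * u1 + e2 * v1) - (e1 * u2 + e2 * v2) + (e1 * u1 * u2 + e2 * v1 * v2) by canonF; ring.
  rewrite ha hb; canonF; ring.
rewrite (simpG2 _ _ _ _ _ _ _ _ (@L1 C) (@L0 C)).
have h0 : coef2 (L ((1 - e1 - e2) * 1 * 1 + e1 * (1 - u1) * (1 - u1) + e2 * (1 - v1) * (1 - v1)) * (cst X1 * X1) +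
     L (e1 * u1 * u2 + e2 * v1 * v2 - 1) * (cst X1 * X2 + cst X2 * X1) +
     L ((1 - e1 - e2) * 1 * 1 + e1 * (1 - u2) * (1 - u2) + e2 * (1 - v2) * (1 - v2)) * (cst X2 * X2)) 0 0 = 0.
  by rewrite coef2_H !coef2X1 !coef2X2 /= !mulr0 !addr0.
have [_ ->] := low_pow N h0.
rewrite coef2_natM coef2_H !coef2X1 !coef2X2 /= !mulr0 !mulr1 !addr0 add0r.
by rewrite coef2D !coef2_cst !coef2X1 !coef2X2 /= mulr0 mulr1 addr0.
Qed.

End Fin3.

Unset Implicit Arguments.
Theorem mainTheorem2 (C : numClosedFieldType) (N : nat) (eta1 eta2 u1 v1 u2 v2 : C) :
  (1 <= N)%N ->
  0 < eta1 -> eta1 < 1 -> 0 < eta2 -> eta2 < 1 -> eta1 + eta2 < 1 ->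
  (Kraw2_orthogonal N eta1 eta2 u1 v1 u2 v2 ->
     [/\ eta1 * u1 + eta2 * v1 = 1, eta1 * u2 + eta2 * v2 = 1
       & eta1 * u1 * u2 + eta2 * v1 * v2 = 1])
  /\
  (u1 \notin [:: 0; 1] -> u2 \notin [:: 0; 1] ->
   v1 \notin [:: 0; 1] -> v2 \notin [:: 0; 1] -> u1 * v2 - u2 * v1 != 0 ->
   [/\ eta1 * u1 + eta2 * v1 = 1, eta1 * u2 + eta2 * v2 = 1
     & eta1 * u1 * u2 + eta2 * v1 * v2 = 1] ->
   Kraw2_orthogonal N eta1 eta2 u1 v1 u2 v2).
Proof.
move=> hN _ _ _ _ _; split.
  move=> horth.
  have key : forall m1 m2 n1 n2, (m1 + m2 <= N)%N -> (n1 + n2 <= N)%N -> (m1, m2) <> (n1, n2) ->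
    \sum_(x1 < N.+1) \sum_(x2 < N.+1) (if (x1 + x2 <= N)%N then
     trinom N x1 x2 eta1 eta2 * coef2 (q N u1 v1 u2 v2 x1 x2) m1 m2 * coef2 (q N u1 v1 u2 v2 x1 x2) n1 n2 else 0) = 0.
    move=> m1 m2 n1 n2 hm hn hmn.
    by rewrite -(orth_coef eta1 eta2 u1 v1 u2 v2 hm hn) (horth _ _ _ _ hm hn hmn) mul0r.
  have hN0 : N%:R != 0 :> C by rewrite pnatr_eq0 -lt0n.
  have [l10 l01] := Z1_low N eta1 eta2 u1 v1 u2 v2.
  have e10 : coef2 (Z1 N eta1 eta2 u1 v1 u2 v2) 1 0 = 0.
    rewrite Z1_coef -[RHS](key 1 0 0 0 hN (leq0n N)) //; apply: eq_bigr => x1 _; apply: eq_bigr => x2 _.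
    by rewrite q00 mulr1.
  have e01 : coef2 (Z1 N eta1 eta2 u1 v1 u2 v2) 0 1 = 0.
    rewrite Z1_coef -[RHS](key 0 1 0 0 hN (leq0n N)) //; apply: eq_bigr => x1 _; apply: eq_bigr => x2 _.
    by rewrite q00 mulr1.
  have ha : eta1 * u1 + eta2 * v1 = 1.
    move: e10; rewrite l10 => /eqP; rewrite mulf_eq0 (negbTE hN0) /= subr_eq0 => /eqP.
    by move=> ->.
  have hb : eta1 * u2 + eta2 * v2 = 1.
    move: e01; rewrite l01 => /eqP; rewrite mulf_eq0 (negbTE hN0) /= subr_eq0 => /eqP.
    by move=> ->.
  split=> //.
  have := @Zs_low C N eta1 eta2 u1 v1 u2 v2 ha hb.
  rewrite Z_coef (key 1 0 0 1 hN hN) // => /esym /eqP; rewrite mulf_eq0 (negbTE hN0) /= subr_eq0.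
  by move/eqP.
move=> _ _ _ _ _ [ha hb hc] m1 m2 n1 n2 hm hn hmn.
have := orth_coef eta1 eta2 u1 v1 u2 v2 hm hn.
rewrite -Z_coef suff_main // => /eqP; rewrite mulf_eq0 => /orP [/eqP //|].
by rewrite mulf_eq0 (negbTE (tri_neq0 C hm)) (negbTE (tri_neq0 C hn)).
Qed.
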